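(* Let $n\ge 2$. The map sending a fully heterochronous ranked tree shape with $n$ leaves to its $\mathbf{F}$-matrix is a bijection between the set of fully heterochronous ranked tree shapes with $n$ leaves and the set of $(2n-2)\times(2n-2)$ lower triangular matrices $F=(F_{i,j})_{0\le i,j\le 2n-3}$ of non-negative integers satisfying the following constraints. 1. Rows are monotone increasing: $F_{i,j-1}\le F_{i,j}$ for $1\le j\le i\le 2n-3$. 2. Columns are monotone decreasing with difference at most $1$: $F_{i-1,j}-1\le F_{i,j}\le F_{i-1,j}$ for $0\le j<i\le 2n-3$. 3. (a) The diagonal entries are positive and satisfy $F_{0,0}=2$, $F_{i,i}=F_{i-1,i-1}\pm 1$ for $0<i<2n-3$, and $F_{2n-3,2n-3}=1$. (In the tree, $F_{i,i}=F_{i-1,i-1}-1$ if the node of rank $i$ is a leaf, i.e. the $i$-th event is a sampling event, and $F_{i,i}=F_{i-1,i-1}+1$ if it is an internal node, i.e. a coalescent event.) (b) The subdiagonal entries satisfy $F_{i,i-1}=F_{i-1,i-1}-1$ for $1\le i\le 2n-3$. (c) For $2\le i\le 2n-3$ and $1\le j\le i-2$, $$F_{i,j-1}+F_{i-1,j}-F_{i-1,j-1}-1\le F_{i,j}\le F_{i,j-1}+F_{i-1,j}-F_{i-1,j-1}.$$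
   Context: A fully heterochronous ranked tree shape with $n$ leaves is a rooted full binary tree (every node has out-degree $0$ or $2$), without leaf labels, with $n$ leaves and $n-1$ internal nodes, together with a total ordering of all $2n-1$ nodes (leaves included) such that nodes appear in increasing order along every path from the root to a leaf; the position of a node in this order, numbered $0,1,\dots,2n-2$, is its rank (the root has rank $0$). Two such objects are identified if there is an isomorphism of rooted trees preserving ranks. Its $\mathbf{F}$-matrix is the $(2n-2)\times(2n-2)$ lower triangular matrix $F$, with indices running from $0$ to $2n-3$, where for $0\le j\le i$ the entry $F_{i,j}$ is the number of edges from a node $v$ to a node $w$ (with $v$ the parent of $w$) such that the rank of $v$ is at most $j$ and the rank of $w$ is larger than $i$. *)

(* Defs.v *)
From mathcomp Require Import all_boot all_order all_algebra.
Unset Printing Implicit Defensive.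

(* A fully heterochronous ranked tree shape with n leaves, up to
   rank-preserving isomorphism, is encoded canonically by naming every node by
   its rank (0 .. 2n-2) and recording its parent: p v = rank of the parent of
   the node of rank v (the value p 0 for the root is a dummy, fixed to 0). *)

Definition nchildren (n : nat) (p : {ffun 'I_(2 * n - 1) -> 'I_(2 * n - 1)})
  (v : 'I_(2 * n - 1)) : nat :=
  #|[set w : 'I_(2 * n - 1) | (val w != 0) && (p w == v)]|.

Definition is_rts (n : nat) (p : {ffun 'I_(2 * n - 1) -> 'I_(2 * n - 1)}) : bool :=
  [&& [forall v, if val v == 0 then val (p v) == 0 else val (p v) < val v],
      [forall v, (nchildren n p v == 0) || (nchildren n p v == 2)]
    & #|[set v | nchildren n p v == 0]| == n].

Definition rts (n : nat) := {p : {ffun 'I_(2 * n - 1) -> 'I_(2 * n - 1)} | is_rts n p}.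

Definition Fmat {n : nat} (t : rts n) : 'M[nat]_(2 * n - 2) :=
  \matrix_(i, j) if val j <= val i then
      #|[set w : 'I_(2 * n - 1) | [&& val w != 0, val (val t w) <= val j & val i < val w]]|
    else 0.

(* access to matrix entries by natural-number indices (0 outside range) *)
Definition mat_at {m : nat} (M : 'M[nat]_m) (i j : nat) : nat :=
  match insub i, insub j with
  | Some i', Some j' => M i' j'
  | _, _ => 0
  end.

(* The constraints of the theorem, with N = 2n-3.  Subtractions are
   rearranged into additions so that nat arithmetic is exact. *)
Definition Fvalid (n : nat) (M : 'M[nat]_(2 * n - 2)) : Prop :=
  let N := 2 * n - 3 in
  let F := mat_at (m := 2 * n - 2) M in
  (forall i j : 'I_(2 * n - 2), val i < val j -> M i j = 0) /\
  (forall i j, 1 <= j -> j <= i -> i <= N -> F i (j - 1) <= F i j) /\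
  (forall i j, j < i -> i <= N ->
     F (i - 1) j <= F i j + 1 /\ F i j <= F (i - 1) j) /\
  (forall i, i <= N -> 0 < F i i) /\
  F 0 0 = 2 /\
  (forall i, 0 < i -> i < N ->
     F i i = F (i - 1) (i - 1) + 1 \/ F i i + 1 = F (i - 1) (i - 1)) /\
  F N N = 1 /\
  (forall i, 1 <= i -> i <= N -> F i (i - 1) + 1 = F (i - 1) (i - 1)) /\
  (forall i j, 2 <= i -> i <= N -> 1 <= j -> j <= i - 2 ->
     F i (j - 1) + F (i - 1) j <= F i j + F (i - 1) (j - 1) + 1 /\
     F i j + F (i - 1) (j - 1) <= F i (j - 1) + F (i - 1) j).

(* Main.v *)
Require Import Defs.
From mathcomp Require Import all_boot all_order all_algebra zify.

Definition Sf (m : nat) (q : nat -> nat) (i j : nat) : nat :=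
  \sum_(i.+1 <= w < m) (q w <= j : nat).
Definition Cf (m : nat) (q : nat -> nat) (v : nat) : nat :=
  \sum_(1 <= w < m) (q w == v : nat).

Lemma S_step m q k j : k.+1 < m -> Sf m q k j = (q k.+1 <= j) + Sf m q k.+1 j.
Proof. by move=> h; rewrite /Sf big_ltn. Qed.

Lemma S_geq m q i j : m <= i.+1 -> Sf m q i j = 0.
Proof. by move=> h; rewrite /Sf big_geq. Qed.

Lemma C0 m q : Cf m q 0 = Sf m q 0 0.
Proof. by apply: eq_bigr => w _; rewrite leqn0. Qed.

Lemma term_le a b (F : nat -> nat) w : a <= w < b -> F w <= \sum_(a <= w' < b) F w'.
Proof.
move=> h; rewrite (bigD1_seq w) /=; first exact: leq_addr.
  by rewrite mem_index_iota.
exact: iota_uniq.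
Qed.

Lemma C_step m q (Hq : forall w, 0 < w < m -> q w < w) k :
  k.+1 < m -> Sf m q k.+1 k.+1 + 1 = Sf m q k k + Cf m q k.+1.
Proof.
move=> hk; rewrite (S_step m q k k hk).
have -> : q k.+1 <= k by rewrite -ltnS; apply: Hq; lia.
rewrite /Cf (@big_cat_nat _ _ _ k.+2) //=.
rewrite big_nat_cond big1 ?add0n; last first.
  move=> w /andP [/andP [h1 h2] _].
  have hw : q w < w by apply: Hq; lia.
  have -> : (q w == k.+1) = false by apply/negbTE; rewrite neq_ltn; lia.
  by [].
rewrite [LHS]addnC -addnA; congr (_ + _); rewrite /Sf.
rewrite -big_split /=; apply: eq_bigr => w _.
case: (ltngtP (q w) k.+1) => h //=.
- by rewrite -ltnS h.
- by rewrite leqNgt (ltnW h).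
- by rewrite h ltnn.
Qed.

Lemma C_sum m q (Hq : forall w, 0 < w < m -> q w < w) k :
  k < m -> \sum_(0 <= v < k.+1) Cf m q v = Sf m q k k + k.
Proof.
elim: k => [|k IH] hk; first by rewrite big_nat1 C0 addn0.
rewrite big_nat_recr //= IH; last lia.
have := C_step m q Hq k hk; lia.
Qed.

Lemma card_ord_sum m (P : pred 'I_m) (c : nat -> bool) :
  (forall w, P w = c (val w)) -> #|[set w | P w]| = \sum_(0 <= w < m) c w.
Proof.
move=> hP; rewrite -sum1_card big_mkcond /= big_mkord.
by apply: eq_bigr => w _; rewrite inE hP; case: (c w).
Qed.

Lemma S_mono m q i j1 j2 : j1 <= j2 -> Sf m q i j1 <= Sf m q i j2.
Proof.
move=> hj; apply: leq_sum => w _.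
by case: (leqP (q w) j1) => h //=; rewrite (leq_trans h hj).
Qed.

Lemma exists_cross m q (Hq : forall w, 0 < w < m -> q w < w) i :
  forall w, i < w < m -> exists2 w', i < w' < m & q w' <= i.
Proof.
elim/ltn_ind => w IH hw.
case: (leqP (q w) i) => h; first by exists w.
have hqw : q w < w by apply: Hq; lia.
apply: (IH (q w) hqw); lia.
Qed.

Lemma S_pos m q (Hq : forall w, 0 < w < m -> q w < w) i : i.+1 < m -> 0 < Sf m q i i.
Proof.
move=> hi; have [w hw hq] := exists_cross m q Hq i i.+1 (ltac:(lia)).
apply: leq_trans (term_le _ _ (fun w => (q w <= i : nat)) w hw); by rewrite hq.
Qed.

Definition qf m (p : {ffun 'I_m -> 'I_m}) (w : nat) : nat :=
  if insub w is Some w' then val (p w') else 0.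

Arguments qf {m} p w.

Lemma qfE m p (w : 'I_m) : qf p (val w) = val (p w).
Proof. by rewrite /qf valK. Qed.

Lemma tree_Hq n (t : rts n) w : 0 < w < 2 * n - 1 -> qf (val t) w < w.
Proof.
move=> /andP [h0 hw]; have := valP t; case/and3P => /forallP H _ _.
have := H (Ordinal hw); rewrite -[w]/(val (Ordinal hw)) qfE /=.
by case: eqP => // e; rewrite e in h0.
Qed.

Lemma sum_nz_C m q v :
  \sum_(0 <= w < m) ((w != 0) && (q w == v)) = Cf m q v.
Proof.
case: m => [|m]; first by rewrite /Cf !big_geq.
rewrite big_ltn //= add0n; apply: eq_big_nat => w hw.
by have -> : w != 0 by lia.
Qed.

Lemma nchildrenE n (p : {ffun 'I_(2 * n - 1) -> 'I_(2 * n - 1)}) v :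
  nchildren n p v = Cf (2 * n - 1) (qf p) (val v).
Proof.
rewrite /nchildren -sum_nz_C; apply: card_ord_sum => w.
by rewrite qfE.
Qed.

Lemma tree_C n (t : rts n) v : v < 2 * n - 1 ->
  Cf (2 * n - 1) (qf (val t)) v = 0 \/ Cf (2 * n - 1) (qf (val t)) v = 2.
Proof.
move=> hv; have := valP t; case/and3P => _ /forallP H _.
have := H (Ordinal hv); rewrite nchildrenE /=.
by case/orP => /eqP ->; [left|right].
Qed.

Lemma sum_S m q i j : i < m ->
  \sum_(0 <= w < m) [&& w != 0, q w <= j & i < w] = Sf m q i j.
Proof.
move=> hi; rewrite (@big_cat_nat _ _ _ i.+1) //= big_nat_cond big1 ?add0n.
  apply: eq_big_nat => w hw; have -> : (w != 0) by lia.
  have -> : i < w by lia.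
  by rewrite andbT.
move=> w /andP [hw _]; have -> : i < w = false by lia.
by rewrite !andbF.
Qed.

Lemma FS n (t : rts n) i j : j <= i -> j < 2 * n - 2 -> i < 2 * n - 1 ->
  mat_at (Fmat t) i j = Sf (2 * n - 1) (qf (val t)) i j.
Proof.
move=> hji hj hi; rewrite /mat_at.
case: insubP => [i' hi' ei|hi']; last first.
  by rewrite S_geq //; lia.
case: insubP => [j' hj' ej|hj']; last by lia.
rewrite mxE ei ej hji -sum_S //; apply: card_ord_sum => w.
by rewrite qfE.
Qed.

Lemma tree_valid n (hn : 2 <= n) (t : rts n) : Fvalid n (Fmat t).
Proof.
set q := qf (val t).
have Hq : forall w, 0 < w < 2 * n - 1 -> q w < w by move=> w; apply: tree_Hq.
have HC : forall v, v < 2 * n - 1 -> Cf (2 * n - 1) q v = 0 \/ Cf (2 * n - 1) q v = 2 := tree_C n t.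
have HF : forall i j, j <= i -> j < 2 * n - 2 -> i < 2 * n - 1 ->
  mat_at (Fmat t) i j = Sf (2 * n - 1) q i j := FS n t.
clearbody q.
rewrite /Fvalid; cbv zeta.
split.
  by move=> i j hij; rewrite mxE leqNgt hij.
split.
  move=> i j h1 h2 h3; rewrite !HF; try lia.
  by apply: S_mono; lia.
split.
  move=> i j h1 h2; rewrite !HF; try lia.
  case: i h1 h2 => [|k] h1 h2 //; rewrite (_ : k.+1 - 1 = k); last lia.
  rewrite (S_step _ q k j); last lia.
  by case: (q k.+1 <= j) => /=; lia.
split.
  by move=> i hi; rewrite HF; try lia; apply: (S_pos _ q Hq); lia.
split.
  rewrite HF; try lia; rewrite -C0.
  have : (q 1 == 0 : nat) <= Cf (2 * n - 1) q 0 by apply: term_le; lia.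
  have -> : q 1 == 0 by have := Hq 1; lia.
  by case: (HC 0 ltac:(lia)) => ->.
split.
  move=> i h1 h2; rewrite !HF; try lia.
  case: i h1 h2 => [|k] h1 h2 //; rewrite (_ : k.+1 - 1 = k); last lia.
  have := C_step _ q Hq k ltac:(lia).
  by case: (HC k.+1 ltac:(lia)) => ->; lia.
split.
  rewrite HF; try lia.
  rewrite (S_step _ q) ?S_geq; try lia.
  by have -> : q (2 * n - 3).+1 <= 2 * n - 3 by have := Hq (2 * n - 3).+1; lia.
split.
  move=> i h1 h2; rewrite !HF; try lia.
  case: i h1 h2 => [|k] h1 h2 //; rewrite (_ : k.+1 - 1 = k); last lia.
  rewrite (S_step _ q k k); last lia.
  have -> : q k.+1 <= k by have := Hq k.+1; lia.
  by rewrite addnC.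
move=> i j h1 h2 h3 h4; rewrite !HF; try lia.
case: i h1 h2 h4 => [|k] h1 h2 h4 //; rewrite (_ : k.+1 - 1 = k); last lia.
case: j h3 h4 => [|l] h3 h4 //; rewrite (_ : l.+1 - 1 = l); last lia.
rewrite !(S_step _ q k); try lia.
Qed.

Lemma tree_col n (t : rts n) k j : 0 < k < 2 * n - 1 -> j < k ->
  mat_at (Fmat t) (k - 1) j = mat_at (Fmat t) k j + (qf (val t) k <= j).
Proof.
move=> hk hj; rewrite !FS; try lia.
case: k hk hj => [|k] hk hj //; rewrite (_ : k.+1 - 1 = k); last lia.
by rewrite (S_step _ _ k j); [rewrite addnC|lia].
Qed.

Lemma tree_q0 n (t : rts n) (w : 'I_(2 * n - 1)) : val w = 0 -> val (val t w) = 0.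
Proof.
move=> h; have := valP t; case/and3P => /forallP H _ _.
by have := H w; rewrite h eqxx => /eqP.
Qed.

Lemma tree_inj n : injective (@Fmat n).
Proof.
move=> t1 t2 e.
have Hq : forall w, 0 < w < 2 * n - 1 -> qf (val t1) w = qf (val t2) w.
  move=> w hw.
  have h1 := tree_Hq n t1 w hw; have h2 := tree_Hq n t2 w hw.
  have c1 := tree_col n t1 w (qf (val t1) w) hw h1.
  have c2 := tree_col n t2 w (qf (val t1) w) hw h1.
  have d1 := tree_col n t1 w (qf (val t2) w) hw h2.
  have d2 := tree_col n t2 w (qf (val t2) w) hw h2.
  rewrite e in c1 d1.
  rewrite leqnn in c2 d2 c1 d1 *.
  rewrite c2 in c1; rewrite d2 in d1.
  have e1 : qf (val t2) w <= qf (val t1) w.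
    by move: c1 => /addnI; rewrite leqnn; case: (_ <= _).
  have e2 : qf (val t1) w <= qf (val t2) w.
    by move: d1 => /addnI; case: (_ <= _).
  lia.
apply: val_inj; apply/ffunP => w; apply: val_inj.
case: (posnP (val w)) => h.
  by rewrite !tree_q0.
by rewrite -!qfE; apply: Hq; rewrite h ltn_ord.
Qed.

Definition dpred (F : nat -> nat -> nat) k := fun j => F k j < F (k - 1) j.
Definition parn (F : nat -> nat -> nat) k := find (dpred F k) (iota 0 k).

Lemma parn_le F k : parn F k <= k.
Proof. by have := find_size (dpred F k) (iota 0 k); rewrite size_iota. Qed.

Lemma mat_out m (M : 'M[nat]_m) i j : m <= i -> mat_at M i j = 0.
Proof. by move=> h; rewrite /mat_at; case: insubP => // i' hi; lia. Qed.

Lemma mat_in m (M : 'M[nat]_m) (i j : 'I_m) : mat_at M i j = M i j.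
Proof. by rewrite /mat_at !valK. Qed.

Ltac destr HV := rewrite /Fvalid in HV; cbv zeta in HV;
  case: HV => Hlt [Hrow [Hcol [Hpos [H00 [Hdiag [HNN [Hsub H3c]]]]]]].

Section Surj.
Variable n : nat.
Hypothesis hn : 2 <= n.
Variable M : 'M[nat]_(2 * n - 2).
Hypothesis HV : Fvalid n M.
Local Notation F := (mat_at M).

Lemma rowmono i j j' : j <= j' -> j' <= i -> i <= 2 * n - 3 -> F i j <= F i j'.
Proof.
have HV' := HV; destr HV'.
move=> h1; rewrite -(subnKC h1); elim: (j' - j) => [|d IH] h2 h3; first by rewrite addn0.
apply: leq_trans (IH ltac:(lia) h3) _.
have := Hrow i (j + d.+1) ltac:(lia) ltac:(lia) h3.
by rewrite (_ : j + d.+1 - 1 = j + d); last lia.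
Qed.

Lemma diff01 k j : 0 < k < 2 * n - 1 -> j < k -> F k j <= F (k - 1) j <= F k j + 1.
Proof.
have HV' := HV; destr HV'.
move=> hk hj; case: (leqP k (2 * n - 3)) => hkN.
  by have := Hcol k j hj hkN; lia.
rewrite mat_out; last lia.
have := rowmono (k - 1) j (2 * n - 3) ltac:(lia) ltac:(lia) ltac:(lia).
rewrite (_ : k - 1 = 2 * n - 3) in HNN *; last lia.
by rewrite HNN; lia.
Qed.

Lemma dtop k : 0 < k < 2 * n - 1 -> dpred F k (k - 1).
Proof.
have HV' := HV; destr HV'.
move=> hk; rewrite /dpred; case: (leqP k (2 * n - 3)) => hkN.
  by have := Hsub k ltac:(lia) hkN; lia.
rewrite mat_out; last lia.
by rewrite (_ : k - 1 = 2 * n - 3); [rewrite HNN|lia].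
Qed.

Lemma dmono k j : 0 < k < 2 * n - 1 -> j.+1 < k -> dpred F k j -> dpred F k j.+1.
Proof.
have HV' := HV; destr HV'.
move=> hk hj; rewrite /dpred => hd.
case: (leqP k (2 * n - 3)) => hkN.
  case: (ltnP j.+2 k) => hj2; last first.
    have := dtop k hk; rewrite /dpred (_ : k - 1 = j.+1) //; lia.
  have := H3c k j.+1.
  rewrite (_ : j.+1 - 1 = j); last lia.
  have := diff01 k j ltac:(lia) ltac:(lia).
  move=> /andP [a b] /(_ ltac:(lia) hkN ltac:(lia) ltac:(lia)) [c d].
  lia.
rewrite (mat_out _ M k j) in hd; last lia.
rewrite (mat_out _ M k j.+1); last lia.
have := rowmono (k - 1) j j.+1 ltac:(lia) ltac:(lia) ltac:(lia); lia.
Qed.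

Lemma dchar k j : 0 < k < 2 * n - 1 -> j < k -> dpred F k j = (parn F k <= j).
Proof.
move=> hk hj.
have hh : has (dpred F k) (iota 0 k).
  apply/hasP; exists (k - 1); last exact: dtop.
  by rewrite mem_iota; lia.
have hp : parn F k < k by have := hh; rewrite has_find size_iota.
case: (leqP (parn F k) j) => h.
  have := nth_find 0 hh; rewrite nth_iota // add0n => hq.
  change (is_true (dpred F k (parn F k))) in hq.
  have cl : forall d, parn F k + d < k -> dpred F k (parn F k + d).
    elim=> [|d IH] hd; first by rewrite addn0.
    rewrite addnS; apply: dmono; try lia.
  have := cl (j - parn F k) ltac:(lia).
  by rewrite (subnKC h).
have := before_find 0 h; rewrite nth_iota ?add0n; last lia.
by move=> ->.
Qed.

Lemma parn_lt k : 0 < k < 2 * n - 1 -> parn F k < k.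
Proof.
move=> hk; have hh : has (dpred F k) (iota 0 k).
  apply/hasP; exists (k - 1); last exact: dtop.
  by rewrite mem_iota; lia.
by have := hh; rewrite has_find size_iota.
Qed.

Lemma colF k j : 0 < k < 2 * n - 1 -> j < k -> F (k - 1) j = F k j + (parn F k <= j).
Proof.
move=> hk hj; have h1 := diff01 k j hk hj; have h2 := dchar k j hk hj.
rewrite /dpred in h2; case: (parn F k <= j) in h2 *; lia.
Qed.

Lemma FSeq j i : j <= i -> i < 2 * n - 1 -> j <= 2 * n - 3 ->
  F i j = Sf (2 * n - 1) (parn F) i j.
Proof.
move=> hji hi hj.
suff H : forall t i, i + t = 2 * n - 2 -> j <= i -> F i j = Sf (2 * n - 1) (parn F) i j.
  by apply: (H (2 * n - 2 - i)); lia.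
elim=> [|t IH] i' e hji'.
  by rewrite mat_out ?S_geq; lia.
have := colF i'.+1 j ltac:(lia) ltac:(lia); rewrite (_ : i'.+1 - 1 = i'); last lia.
move=> ->; rewrite IH; try lia.
rewrite (S_step _ _ i' j); lia.
Qed.

Lemma parity i : i < 2 * n - 3 -> odd (F i i) = odd i.
Proof.
have HV' := HV; destr HV'.
elim: i => [|i IH] hi; first by rewrite H00.
have := Hdiag i.+1 ltac:(lia) hi; rewrite (_ : i.+1 - 1 = i); last lia.
case=> e.
  by rewrite e addn1 /= IH //; lia.
by rewrite /= -IH; try lia; rewrite -e addn1 /= negbK.
Qed.

Lemma F_Nm1 : F (2 * n - 4) (2 * n - 4) = 2.
Proof.
have HV' := HV; destr HV'.
have h1 := parity (2 * n - 4) ltac:(lia).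
have h2 := Hsub (2 * n - 3) ltac:(lia) (leqnn _).
rewrite (_ : 2 * n - 3 - 1 = 2 * n - 4) in h2; last lia.
have h3 := rowmono (2 * n - 3) (2 * n - 4) (2 * n - 3) ltac:(lia) ltac:(lia) (leqnn _).
have h4 := Hpos (2 * n - 4) ltac:(lia).
rewrite HNN in h3.
have ev : odd (2 * n - 4) = false.
  by rewrite (_ : 2 * n - 4 = (n - 2).*2) ?odd_double //; lia.
rewrite ev in h1.
have : F (2 * n - 4) (2 * n - 4) = 1 \/ F (2 * n - 4) (2 * n - 4) = 2 by lia.
by case=> // e; rewrite e in h1.
Qed.

Lemma Cval v : v < 2 * n - 1 ->
  Cf (2 * n - 1) (parn F) v = 0 \/ Cf (2 * n - 1) (parn F) v = 2.
Proof.
have HV' := HV; destr HV'.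
move=> hv; case: v hv => [|k] hv.
  by rewrite C0 -FSeq //; try lia; right.
have cs := C_step (2 * n - 1) (parn F) parn_lt k hv.
case: (ltngtP k.+1 (2 * n - 3)) => hk.
- rewrite -!FSeq in cs; try lia.
  have := Hdiag k.+1 ltac:(lia) hk; rewrite (_ : k.+1 - 1 = k); last lia.
  lia.
- rewrite S_geq in cs; last lia.
  rewrite -FSeq in cs; try lia.
  rewrite (_ : k = 2 * n - 3) in cs *; last lia.
  rewrite HNN in cs; lia.
- rewrite -!FSeq in cs; try lia.
  rewrite hk HNN in cs *; rewrite (_ : k = 2 * n - 4) ?F_Nm1 in cs; lia.
Qed.

End Surj.

Definition mkp n (F : nat -> nat -> nat) : {ffun 'I_(2 * n - 1) -> 'I_(2 * n - 1)} :=
  [ffun w => Ordinal (leq_ltn_trans (parn_le F (val w)) (ltn_ord w))].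

Lemma qf_mkp n F w : w < 2 * n - 1 -> qf (mkp n F) w = parn F w.
Proof. by move=> hw; rewrite -[w]/(val (Ordinal hw)) qfE ffunE. Qed.

Lemma Cf_ext m q1 q2 v : (forall w, w < m -> q1 w = q2 w) -> Cf m q1 v = Cf m q2 v.
Proof. by move=> h; apply: eq_big_nat => w hw; rewrite h //; lia. Qed.

Section Surj2.
Variable n : nat.
Hypothesis hn : 2 <= n.
Variable M : 'M[nat]_(2 * n - 2).
Hypothesis HV : Fvalid n M.
Local Notation F := (mat_at M).

Lemma mk_rts : is_rts n (mkp n F).
Proof.
apply/and3P; split.
- apply/forallP => v; rewrite ffunE /=; case: eqP => h; first by rewrite h.
  by apply: (parn_lt n hn M HV); rewrite ltn_ord; lia.
- apply/forallP => v; rewrite nchildrenE (Cf_ext _ _ (parn F)); last exact: qf_mkp.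
  by case: (Cval n hn M HV (val v) (ltn_ord v)) => ->.
rewrite (card_ord_sum _ _ (fun v => Cf (2 * n - 1) (parn F) v == 0)); last first.
  by move=> v; rewrite nchildrenE (Cf_ext _ _ (parn F)) //; exact: qf_mkp.
have s1 := C_sum (2 * n - 1) (parn F) (parn_lt n hn M HV) (2 * n - 2) ltac:(lia).
rewrite S_geq in s1; last lia.
rewrite (_ : (2 * n - 2).+1 = 2 * n - 1) in s1; last lia.
have s2 : \sum_(0 <= v < 2 * n - 1) Cf (2 * n - 1) (parn F) v +
          2 * \sum_(0 <= v < 2 * n - 1) (Cf (2 * n - 1) (parn F) v == 0 : nat) = 2 * (2 * n - 1).
  rewrite big_distrr -big_split /=.
  rewrite (eq_big_nat _ _ (F2 := fun _ => 2)) ?sum_nat_const_nat; first lia.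
  move=> v hv; by case: (Cval n hn M HV v ltac:(lia)) => ->.
apply/eqP; lia.
Qed.

Lemma mk_surj : exists t : rts n, Fmat t = M.
Proof.
have HV' := HV; destr HV'.
exists (exist _ (mkp n F) mk_rts).
apply/matrixP => i j; rewrite mxE /=.
case: leqP => h; last by rewrite Hlt.
rewrite (card_ord_sum _ _ (fun w => [&& w != 0, parn F w <= j & i < w])); last first.
  by move=> w; rewrite ffunE.
rewrite sum_S; last by have := ltn_ord i; lia.
rewrite -(FSeq n hn M HV) //; try (by have := ltn_ord i; lia); try (by have := ltn_ord j; lia).
by rewrite mat_in.
Qed.

End Surj2.

Theorem theorem2 (n : nat) (hn : 2 <= n) :
  (forall t : rts n, Fvalid n (Fmat t)) /\
  injective (@Fmat n) /\
  (forall M : 'M[nat]_(2 * n - 2), Fvalid n M -> exists t : rts n, Fmat t = M).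
Proof.
split; first by move=> t; apply: tree_valid.
split; first exact: tree_inj.
by move=> M HV; apply: mk_surj.
Qed.
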